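(* Let $p\ge 2$ and $m\ge 2$ be integers. There exist $W\in\mathbb{R}^{2\times p}$ and $V\in\mathbb{R}^{p\times 2}$ such that the width-$2$ sine network $s^\theta(x)=V\sin(Wx)$, $\theta=(W,V)$, satisfies \[ \mathbb{P}_{(X,Y)\sim\mathcal{D}_m}\big[h_\theta(X)=Y\big]=1 . \]
   Context: Let $[p]=\{0,1,\dots,p-1\}$ and let $e_r$ ($r\in[p]$) be the standard basis vectors of $\mathbb{R}^p$. For an integer $m\ge1$, let $\mathcal{X}_m=\{x\in\{0,1,\dots,m\}^p:\ \|x\|_1=m\}$. The distribution $\mathcal{D}_m$ on $\mathcal{X}_m\times[p]$ is that of $(X,Y)$ where $s_1,\dots,s_m$ are i.i.d. uniform on $[p]$, $X=\sum_{i=1}^m e_{s_i}$ and $Y=(\sum_{i=1}^m s_i)\bmod p$ (equivalently $Y=(\sum_{r\in[p]} rX_r)\bmod p$). The function $\sin$ is applied entrywise. For a score vector $s^\theta(x)\in\mathbb{R}^p$ with coordinates indexed by $[p]$, the predictor is $h_\theta(x)=\ell$ if $s^\theta_\ell(x)>s^\theta_k(x)$ for all $k\ne\ell$, and $h_\theta(x)=\bot$ (an invalid prediction, never equal to any label) otherwise. *)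

(* Defs.v *)
From HB Require Import structures.
From mathcomp Require Import all_boot all_order all_algebra.
From mathcomp Require Import all_classical all_reals.
From mathcomp Require Import trigo.
Set Implicit Arguments. Unset Strict Implicit. Unset Printing Implicit Defensive.
Import Order.TTheory GRing.Theory Num.Theory.
Local Open Scope ring_scope.

Section Defs.
Variables (R : realType) (p m : nat).

Definition sample := {ffun 'I_m -> 'I_p}.

(* X = sum_i e_{s_i}: coordinate r counts the i with s_i = r *)
Definition featX (s : sample) : 'cV[R]_p :=
  \col_(r < p) (#|[set i : 'I_m | s i == r]|)%:R.

Definition labelY (s : sample) : nat := ((\sum_(i < m) nat_of_ord (s i)) %% p)%N.

Definition score (W : 'M[R]_(2, p)) (V : 'M[R]_(p, 2)) (x : 'cV[R]_p) : 'cV[R]_p :=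
  V *m map_mx (@sin R) (W *m x).

Definition strict_argmax (sc : 'cV[R]_p) (l : 'I_p) : bool :=
  [forall k : 'I_p, (k != l) ==> (sc k 0 < sc l 0)].

(* predictor h_theta; None plays the role of the invalid prediction ⊥ *)
Definition h_theta (W : 'M[R]_(2, p)) (V : 'M[R]_(p, 2)) (x : 'cV[R]_p) : option 'I_p :=
  [pick l | strict_argmax (score W V x) l].

(* P_{(X,Y) ~ D_m}[h_theta(X) = Y], with s uniform on [p]^m *)
Definition accuracy (W : 'M[R]_(2, p)) (V : 'M[R]_(p, 2)) : R :=
  (#|[set s : sample | omap (@nat_of_ord p) (h_theta W V (featX s)) == Some (labelY s)]|)%:R
  / (#|{: sample}|)%:R.
End Defs.

(* Main.v *)
Require Import Defs.
From HB Require Import structures.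
From mathcomp Require Import all_boot all_order all_algebra.
From mathcomp Require Import all_classical all_reals.
From mathcomp Require Import trigo.
From mathcomp Require Import zify ring lra.
Import Order.TTheory GRing.Theory Num.Theory.
Local Open Scope ring_scope.

Lemma sum_count (R : realType) p m (s : sample p m) (f : 'I_p -> R) :
  \sum_(r < p) f r * (#|[set i : 'I_m | s i == r]|)%:R = \sum_(i < m) f (s i).
Proof.
rewrite (partition_big (fun i => s i) predT) //=.
apply: eq_bigr => r _.
rewrite (eq_bigr (fun _ => f r)); last by move=> i /eqP->.
by rewrite sumr_const mulr_natr cardsE.
Qed.

Section S.
Variables (R : realType) (p m : nat) (hp : (2 <= p)%N) (hm : (2 <= m)%N).
Definition th : R := pi *+ 2 / p%:R.
Definition Wm : 'M[R]_(2, p) :=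
  \matrix_(j, r) (th * (r : nat)%:R + (j : nat)%:R * (pi / 2 / m%:R)).
Definition Vm : 'M[R]_(p, 2) :=
  \matrix_(l, j) (if (j : nat) == 0%N then sin (th * (l : nat)%:R) else cos (th * (l : nat)%:R)).

Lemma score_eq (s : sample p m) (l : 'I_p) :
  score Wm Vm (featX R s) l 0 =
  cos (th * (((\sum_(i < m) nat_of_ord (s i)) + p - l) %% p)%:R).
Proof.
set S := (\sum_(i < m) nat_of_ord (s i))%N.
have WX : forall j : 'I_2, \sum_r Wm j r * featX R s r 0 = th * S%:R + (j : nat)%:R * (pi / 2).
  move=> j.
  rewrite (eq_bigr (fun r : 'I_p => (th * (r : nat)%:R + (j : nat)%:R * (pi / 2 / m%:R)) *
            (#|[set i : 'I_m | s i == r]|)%:R)); last by move=> r _; rewrite !mxE.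
  rewrite sum_count big_split /= sumr_const card_ord -mulr_sumr -natr_sum -/S.
  congr (_ + _).
  rewrite -mulrnAr; congr (_ * _); rewrite -mulr_natr divfK // pnatr_eq0; lia.
rewrite /score !mxE !big_ord_recl big_ord0 addr0 !mxE !WX /=.
rewrite mul0r addr0 mul1r sinDpihalf.
rewrite addrC [sin _ * _]mulrC [cos _ * _]mulrC -cosB.
have thp : th * p%:R = pi *+ 2 by rewrite /th divfK // pnatr_eq0; lia.
rewrite -(cosD2pi (th * S%:R - th * l%:R)).
have -> : th * S%:R - th * l%:R + pi *+ 2 = th * (S + p - l)%:R.
  rewrite natrB; last by have := ltn_ord l; lia.
  rewrite natrD mulrBr mulrDr thp; ring.
rewrite {1}(divn_eq (S + p - l) p) natrD natrM mulrDr mulrA (mulrC th) -mulrA thp mulrC [_ * ((S + p - l) %/ p)%:R]mulr_natr addrC.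

exact: periodicn (@cosD2pi R) _ _.
Qed.
End S.

Lemma cos_lt1 (R : realType) (x : R) : 0 < x < pi *+ 2 -> cos x < 1.
Proof.
move=> /andP[x0 x2].
have -> : x = (x / 2) *+ 2 by rewrite -mulr_natr mulfVK // pnatr_eq0.
rewrite cos_mulr2n cos2sin2.
have : 0 < sin (x / 2).
  apply: sin_gt0_pi; apply/andP; split; first by rewrite divr_gt0.
  rewrite ltr_pdivrMr // mulr_natr //.
move=> h; have h2 : 0 < sin (x/2) ^+ 2 by rewrite exprn_gt0.
lra.
Qed.

Lemma modp_eq0 p S l : (l < p)%N -> (((S + p - l) %% p == 0)%N = (l == S %% p)%N).
Proof.
move=> lp.
have p0 : (0 < p)%N by lia.
have ha := div.ltn_pmod S p0.
rewrite -addnBA; last by lia.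
rewrite -modnDml.
move: ha; set a := (S %% p)%N => ha.
case: (ltnP (a + (p - l)) p) => h.
  rewrite modn_small //; lia.
have -> : (a + (p - l) = (a + (p - l) - p) + p)%N by lia.
rewrite modnDr modn_small; lia.
Qed.

Theorem mainTheorem1 (R : realType) (p m : nat) (hp : (2 <= p)%N) (hm : (2 <= m)%N) :
  exists (W : 'M[R]_(2, p)) (V : 'M[R]_(p, 2)), accuracy m W V = 1.
Proof.
exists (Wm R p m), (Vm R p).
rewrite /accuracy.
have p0 : (0 < p)%N by lia.
have thp : 0 < th R p by rewrite /th divr_gt0 // ?ltr0n // mulrn_wgt0 // pi_gt0.
have full : [set s : sample p m | omap (@nat_of_ord p) (h_theta (Wm R p m) (Vm R p) (featX R s)) == Some (labelY s)] = [set: sample p m].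
  apply/setP => s; rewrite !inE.
  set S := (\sum_(i < m) nat_of_ord (s i))%N.
  pose y : 'I_p := Ordinal (div.ltn_pmod S p0).
  have sy : score (Wm R p m) (Vm R p) (featX R s) y 0 = 1.
    rewrite score_eq //.
    have := @modp_eq0 p S y (ltn_ord y); rewrite eqxx => /eqP ->.
    by rewrite mulr0 cos0.
  have sk : forall k, k != y -> score (Wm R p m) (Vm R p) (featX R s) k 0 < 1.
    move=> k nk; rewrite score_eq //; apply: cos_lt1.
    have := @modp_eq0 p S k (ltn_ord k).
    have -> : (nat_of_ord k == S %% p)%N = false.
      by apply/negbTE; apply: contra nk => /eqP h; apply/eqP/val_inj.
    move=> /negbT h.
    have rp := div.ltn_pmod (S + p - k) p0.
    move: h rp; set r := ((S + p - k) %% p)%N => h rp.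
    apply/andP; split.
      by rewrite mulr_gt0 // ltr0n lt0n.
    have <- : th R p * p%:R = pi *+ 2 by rewrite /th divfK // pnatr_eq0; lia.
    by rewrite ltr_pM2l // ltr_nat.
  rewrite /h_theta; case: pickP => [l Hl | H].
    case: (eqVneq l y) => [E | ne].
      by rewrite E /labelY /= -/S eqxx.
    move/forallP: Hl => /(_ y); rewrite eq_sym ne /= sy => h1.
    have := sk l ne; lra.
  exfalso; move: (H y) => /negP; apply; apply/forallP => k; apply/implyP => nk.
  by rewrite sy; apply: sk.
rewrite full cardsT divff // pnatr_eq0 -lt0n card_ffun !card_ord expn_gt0 p0 //=.

Qed.
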